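(* Let $n_0,n_1,n_\infty$ be integers with $1\le n_0\le n_1\le n_\infty$, $n=n_0+n_1+n_\infty$, and let $\mathcal{S}_{\mathrm{reg}}=\{(\xi,\eta)\in\mathbb{C}^2 : \eta^n=\xi^{n-n_0}(1-\xi)^{n-n_1}\}\setminus\{(0,0),(1,0)\}$ with the Riemannian metric $\Gamma=\frac{1}{\eta}\,d\xi\odot\frac{1}{\overline{\eta}}\,\overline{d\xi}$. Let $X$ be the holomorphic vector field on $\mathcal{S}_{\mathrm{reg}}$ given by $$X(\xi,\eta)=\eta\frac{\partial}{\partial\xi}+\frac{n-n_0}{n}\,\frac{\xi^{n-n_0-1}(1-\xi)^{n-n_1-1}\bigl(1-\frac{2n-n_0-n_1}{n-n_0}\xi\bigr)}{\eta^{n-2}}\frac{\partial}{\partial\eta}.$$ Then $X$ is the geodesic vector field for the flat Riemannian metric $\Gamma$ on $\mathcal{S}_{\mathrm{reg}}$, i.e. its (real-time) integral curves are geodesics of $(\mathcal{S}_{\mathrm{reg}},\Gamma)$.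
   Context: $X$ is tangent to $\mathcal{S}_{\mathrm{reg}}$ at every point and nowhere vanishing. A holomorphic vector field is regarded as a real vector field on the underlying real surface in the usual way. *)

(* Defs.v *)
From Stdlib Require Import Reals.
From Coquelicot Require Import Coquelicot.
Open Scope R_scope.

Fixpoint Cpown (z : C) (k : nat) : C :=
  match k with O => RtoC 1 | S k' => Cmult z (Cpown z k') end.

(* A metric is given by its coefficient functions g i j (x0,x1),       *)
(* i,j in {0,1} (other indices unused).                               *)
Definition sum2 (f : nat -> R) : R := f 0%nat + f 1%nat.

Definition pd (l : nat) (f : R -> R -> R) (x y : R) : R :=
  match l with
  | O => Derive (fun s => f s y) x
  | _ => Derive (fun s => f x s) y
  end.

Definition gdet (g : nat -> nat -> R -> R -> R) (x y : R) : R :=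
  g 0%nat 0%nat x y * g 1%nat 1%nat x y - g 0%nat 1%nat x y * g 1%nat 0%nat x y.

Definition ginv (g : nat -> nat -> R -> R -> R) (k l : nat) (x y : R) : R :=
  match k, l with
  | O, O => g 1%nat 1%nat x y / gdet g x y
  | O, _ => - g 0%nat 1%nat x y / gdet g x y
  | _, O => - g 1%nat 0%nat x y / gdet g x y
  | _, _ => g 0%nat 0%nat x y / gdet g x y
  end.

Definition christoffel (g : nat -> nat -> R -> R -> R) (k i j : nat) (x y : R) : R :=
  / 2 * sum2 (fun l => ginv g k l x y *
     (pd i (g j l) x y + pd j (g i l) x y - pd l (g i j) x y)).

Definition is_geodesic_chart (g : nat -> nat -> R -> R -> R)
    (c : nat -> R -> R) (a b : R) : Prop :=
  forall t, a < t < b ->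
    (forall k, ex_derive (c k) t /\ ex_derive (Derive (c k)) t) /\
    (forall k, (k < 2)%nat ->
       Derive (Derive (c k)) t
       + sum2 (fun i => sum2 (fun j =>
           christoffel g k i j (c 0%nat t) (c 1%nat t)
           * Derive (c i) t * Derive (c j) t)) = 0).

Definition nsum (n0 n1 ninf : nat) : nat := (n0 + n1 + ninf)%nat.

Definition S_reg (n0 n1 ninf : nat) (p : C * C) : Prop :=
  let n := nsum n0 n1 ninf in
  let (xi, eta) := p in
  Cpown eta n = Cmult (Cpown xi (n - n0)) (Cpown (Cminus (RtoC 1) xi) (n - n1))
  /\ p <> (RtoC 0, RtoC 0) /\ p <> (RtoC 1, RtoC 0).

Definition X_xi (p : C * C) : C := snd p.

Definition X_eta (n0 n1 ninf : nat) (p : C * C) : C :=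
  let n := nsum n0 n1 ninf in
  let (xi, eta) := p in
  Cdiv
    (Cmult (RtoC (INR (n - n0) / INR n))
      (Cmult (Cpown xi (n - n0 - 1))
        (Cmult (Cpown (Cminus (RtoC 1) xi) (n - n1 - 1))
          (Cminus (RtoC 1)
             (Cmult (RtoC (INR (2 * n - n0 - n1) / INR (n - n0))) xi)))))
    (Cpown eta (n - 2)).

(* The metric Gamma = (1/eta) dxi . (1/conj eta) conj(dxi) in the
   (everywhere valid, since eta <> 0 on S_reg) chart xi = x0 + i x1:
   Gamma = |eta|^{-2} (dx0^2 + dx1^2), and on S_reg
   |eta|^{-2} = |xi|^{-2(n-n0)/n} |1-xi|^{-2(n-n1)/n}. *)
Definition conf_factor (n0 n1 ninf : nat) (x y : R) : R :=
  let n := nsum n0 n1 ninf in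
  Rpower (Cmod (x, y)) (- 2 * INR (n - n0) / INR n)
  * Rpower (Cmod (Cminus (RtoC 1) (x, y))) (- 2 * INR (n - n1) / INR n).

Definition Gamma_chart (n0 n1 ninf : nat) (i j : nat) (x y : R) : R :=
  if Nat.eqb i j then conf_factor n0 n1 ninf x y else 0.

Definition is_geodesic_S (n0 n1 ninf : nat) (gam : R -> C * C) (a b : R) : Prop :=
  (forall t, a < t < b -> S_reg n0 n1 ninf (gam t)) /\
  (forall t, a < t < b -> continuous (fun s => fst (gam s)) t
                         /\ continuous (fun s => snd (gam s)) t) /\
  is_geodesic_chart (Gamma_chart n0 n1 ninf)
    (fun k s => match k with O => Re (fst (gam s)) | _ => Im (fst (gam s)) end) a b.

Definition is_integral_curve_X (n0 n1 ninf : nat) (gam : R -> C * C) (a b : R) : Prop :=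
  forall t, a < t < b ->
    S_reg n0 n1 ninf (gam t) /\
    is_derive (fun s => Re (fst (gam s))) t (Re (X_xi (gam t))) /\
    is_derive (fun s => Im (fst (gam s))) t (Im (X_xi (gam t))) /\
    is_derive (fun s => Re (snd (gam s))) t (Re (X_eta n0 n1 ninf (gam t))) /\
    is_derive (fun s => Im (snd (gam s))) t (Im (X_eta n0 n1 ninf (gam t))).

(* Main.v *)
Require Import Defs.
From Stdlib Require Import Reals Lra Lia.
From Coquelicot Require Import Coquelicot.
Open Scope R_scope.

Lemma chris_sum0 (f : R -> R -> R) x y (d : nat -> R) : f x y <> 0 ->
  sum2 (fun i => sum2 (fun j =>
     christoffel (fun i j x y => if Nat.eqb i j then f x y else 0) 0 i j x y * d i * d j))
  = / (2 * f x y) * (Derive (fun s => f s y) x * (d 0%nat ^ 2 - d 1%nat ^ 2)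
                     + 2 * Derive (fun s => f x s) y * d 0%nat * d 1%nat).
Proof.
  intros Hf. unfold sum2, christoffel, ginv, gdet, pd, sum2; simpl.
  rewrite !Derive_const. field. auto.
Qed.

Lemma chris_sum1 (f : R -> R -> R) x y (d : nat -> R) : f x y <> 0 ->
  sum2 (fun i => sum2 (fun j =>
     christoffel (fun i j x y => if Nat.eqb i j then f x y else 0) 1 i j x y * d i * d j))
  = / (2 * f x y) * (- Derive (fun s => f x s) y * (d 0%nat ^ 2 - d 1%nat ^ 2)
                     + 2 * Derive (fun s => f s y) x * d 0%nat * d 1%nat).
Proof.
  intros Hf. unfold sum2, christoffel, ginv, gdet, pd, sum2; simpl.
  rewrite !Derive_const. field. auto.
Qed.

Lemma ln_sqrt' q : 0 <= q -> ln (sqrt q) = / 2 * ln q.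
Proof.
  intros Hq. destruct (Req_dec q 0) as [->|Hq'].
  - rewrite sqrt_0. assert (ln 0 = 0) by (unfold ln; destruct (Rlt_dec 0 0) as [h|h]; [exfalso; lra|reflexivity]). rewrite H; ring.
  - assert (Hs : 0 < sqrt q) by (apply sqrt_lt_R0; lra).
    assert (ln q = ln (sqrt q * sqrt q)) by (rewrite sqrt_sqrt; lra).
    rewrite H, ln_mult by lra. field.
Qed.

Lemma aux2 a N L : -2 * a / N * (/ 2 * L) = - (a / N) * L.
Proof.
  unfold Rdiv. replace (-2 * a * / N * (/ 2 * L)) with ((-2 * / 2) * (a * / N * L)) by ring.
  replace (-2 * / 2) with (-1) by field. ring.
Qed.

Section CF.
Variables n0 n1 ninf : nat.
Let A := INR (nsum n0 n1 ninf - n0) / INR (nsum n0 n1 ninf).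
Let B := INR (nsum n0 n1 ninf - n1) / INR (nsum n0 n1 ninf).

Lemma conf_eq x y : conf_factor n0 n1 ninf x y =
  exp (- A * ln (x^2 + y^2) - B * ln ((1 - x)^2 + y^2)).
Proof.
  unfold conf_factor, Rpower, Cmod, A, B. simpl.
  rewrite !ln_sqrt'.
  - rewrite <- exp_plus. f_equal. replace (1 + - x) with (1 - x) by ring.
    replace ((0 + - y) * ((0 + - y) * 1)) with (y*(y*1)) by ring. rewrite !aux2. ring.
  - apply Rplus_le_le_0_compat; rewrite Rmult_1_r; apply Rle_0_sqr.
  - apply Rplus_le_le_0_compat; rewrite Rmult_1_r; apply Rle_0_sqr.
Qed.

Lemma dcf_x x y : 0 < x^2+y^2 -> 0 < (1-x)^2+y^2 ->
  Derive (fun s => conf_factor n0 n1 ninf s y) x = conf_factor n0 n1 ninf x y *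
   (- A * (2 * x) / (x^2+y^2) + B * (2 * (1 - x)) / ((1-x)^2+y^2)).
Proof.
  intros H1 H2.
  rewrite (Derive_ext _ (fun s => exp (- A * ln (s^2 + y^2) - B * ln ((1 - s)^2 + y^2))))
    by (intros; apply conf_eq).
  apply is_derive_unique. rewrite conf_eq. auto_derive.
  - split; [|split]; auto; lra.
  - match goal with |- _ * exp ?a = exp ?b * _ => replace (exp a) with (exp b) by
      (f_equal; simpl; try replace (1 + - x) with (1 - x) by ring; ring) end.
    field. simpl in *; split; lra.
Qed.

Lemma dcf_y x y : 0 < x^2+y^2 -> 0 < (1-x)^2+y^2 ->
  Derive (fun s => conf_factor n0 n1 ninf x s) y = conf_factor n0 n1 ninf x y *
   (- A * (2 * y) / (x^2+y^2) - B * (2 * y) / ((1-x)^2+y^2)).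
Proof.
  intros H1 H2.
  rewrite (Derive_ext _ (fun s => exp (- A * ln (x^2 + s^2) - B * ln ((1 - x)^2 + s^2))))
    by (intros; apply conf_eq).
  apply is_derive_unique. rewrite conf_eq. auto_derive.
  - split; [|split]; auto; lra.
  - match goal with |- _ * exp ?a = exp ?b * _ => replace (exp a) with (exp b) by
      (f_equal; simpl; try replace (1 + - x) with (1 - x) by ring; ring) end.
    field. simpl in *; split; lra.
Qed.
End CF.
Lemma C_neq0 (x : C) : x <> RtoC 0 -> (fst x <> 0 \/ snd x <> 0).
Proof.
  destruct x as [a b]; simpl; intros H.
  destruct (Req_dec a 0), (Req_dec b 0); subst; auto.
Qed.

Lemma Cmult_eq0 (x y : C) : Cmult x y = RtoC 0 -> x = RtoC 0 \/ y = RtoC 0.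
Proof.
  intros H. destruct x as [a b].
  destruct (Req_dec a 0), (Req_dec b 0); [left; subst; reflexivity|right..];
  replace y with (Cmult (Cinv (a,b)) (Cmult (a,b) y)) by (field; intros E; injection E; lra);
  rewrite H; ring.
Qed.

Lemma Cpown_nz z k : z <> RtoC 0 -> Cpown z k <> RtoC 0.
Proof.
  intros Hz. induction k; simpl.
  - intros E; injection E; lra.
  - intros E. apply Cmult_eq0 in E. tauto.
Qed.

Lemma Ceq_dec (z : C) : z = RtoC 0 \/ z <> RtoC 0.
Proof.
  destruct z as [a b]. destruct (Req_dec a 0), (Req_dec b 0); subst;
  [left; reflexivity| right; intros E; injection E; lra ..].
Qed.

Lemma Cpown_S z k : Cpown z (S k) = Cmult z (Cpown z k).
Proof. reflexivity. Qed.

Lemma RtoC_nz r : r <> 0 -> RtoC r <> RtoC 0.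
Proof. intros H E; injection E; lra. Qed.

Lemma key_C n0 n1 ninf xi eta : (1 <= n0)%nat -> (n0 <= n1)%nat -> (n1 <= ninf)%nat ->
  S_reg n0 n1 ninf (xi, eta) ->
  xi <> RtoC 0 /\ Cminus (RtoC 1) xi <> RtoC 0 /\ eta <> RtoC 0 /\
  X_eta n0 n1 ninf (xi, eta) =
   Copp (Cmult (Cplus (Copp (Cdiv (RtoC (INR (nsum n0 n1 ninf - n0) / INR (nsum n0 n1 ninf))) xi))
                      (Cdiv (RtoC (INR (nsum n0 n1 ninf - n1) / INR (nsum n0 n1 ninf))) (Cminus (RtoC 1) xi)))
               (Cmult eta eta)).
Proof.
  intros h0 h1 h2 [HS [Hn0 Hn1]].
  set (N := nsum n0 n1 ninf) in *.
  assert (E0 : (N - n0 = S (N - n0 - 1))%nat) by (unfold N, nsum; lia).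
  assert (E1 : (N - n1 = S (N - n1 - 1))%nat) by (unfold N, nsum; lia).
  assert (EN : N = S (S (N - 2))) by (unfold N, nsum; lia).
  assert (E2 : (2 * N - n0 - n1 = (N - n0) + (N - n1))%nat) by (unfold N, nsum; lia).
  set (P := Cpown xi (N - n0 - 1)).
  set (Q := Cpown (Cminus (RtoC 1) xi) (N - n1 - 1)).
  set (H := Cpown eta (N - 2)).
  assert (HS' : Cmult eta (Cmult eta H) = Cmult (Cmult xi P) (Cmult (Cminus (RtoC 1) xi) Q)).
  { unfold P, Q, H. rewrite <- !Cpown_S, <- EN, <- E0, <- E1. exact HS. }
  clear HS.
  assert (Hxi : xi <> RtoC 0).
  { intros Z. apply Hn0. f_equal; auto.
    destruct (Ceq_dec eta) as [|Ne]; auto. exfalso.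
    assert (Cmult eta (Cmult eta H) <> RtoC 0).
    { intros W. apply Cmult_eq0 in W as [W|W]; auto. apply Cmult_eq0 in W as [W|W]; auto.
      apply (Cpown_nz eta (N - 2)); auto. }
    apply H0. rewrite HS', Z. ring. }
  assert (Hxi1 : Cminus (RtoC 1) xi <> RtoC 0).
  { intros Z. assert (Exi : xi = RtoC 1) by
      (replace xi with (Cminus (RtoC 1) (Cminus (RtoC 1) xi)) by ring; rewrite Z; ring).
    apply Hn1. f_equal; auto.
    destruct (Ceq_dec eta) as [|Ne]; auto. exfalso.
    assert (Cmult eta (Cmult eta H) <> RtoC 0).
    { intros W. apply Cmult_eq0 in W as [W|W]; auto. apply Cmult_eq0 in W as [W|W]; auto.
      apply (Cpown_nz eta (N - 2)); auto. }
    apply H0. rewrite HS', Z. ring. }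
  assert (Heta : eta <> RtoC 0).
  { intros Z. assert (Cmult (Cmult xi P) (Cmult (Cminus (RtoC 1) xi) Q) = RtoC 0)
      by (rewrite <- HS', Z; ring).
    apply Cmult_eq0 in H0 as [W|W]; apply Cmult_eq0 in W as [W|W]; auto.
    - apply (Cpown_nz xi (N - n0 - 1)); auto.
    - apply (Cpown_nz _ (N - n1 - 1) Hxi1); auto. }
  assert (HP : P <> RtoC 0) by (apply Cpown_nz; auto).
  assert (HQ : Q <> RtoC 0) by (apply Cpown_nz; auto).
  assert (HH : H <> RtoC 0) by (apply Cpown_nz; auto).
  split; [auto|split; [auto|split; [auto|]]].
  cbv beta zeta iota delta [X_eta]. fold N. fold P Q H.
  rewrite E2, plus_INR.
  assert (Ha : INR (N - n0) <> 0) by (apply not_0_INR; unfold N, nsum; lia).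
  assert (Hb : INR (N - n1) <> 0) by (apply not_0_INR; unfold N, nsum; lia).
  assert (Hn : INR N <> 0) by (apply not_0_INR; unfold N, nsum; lia).
  rewrite !RtoC_div, RtoC_plus by auto.
  assert (EP : P = Cdiv (Cmult eta (Cmult eta H)) (Cmult (Cmult xi (Cminus (RtoC 1) xi)) Q)).
  { rewrite HS'. field. auto. }
  rewrite EP. field. 
  repeat split; auto; apply RtoC_nz; auto.
Qed.

Lemma key_R n0 n1 ninf x y u v l : (1 <= n0)%nat -> (n0 <= n1)%nat -> (n1 <= ninf)%nat ->
  S_reg n0 n1 ninf (((x, y) : C), ((u, v) : C)) -> l <> 0 ->
  let A := INR (nsum n0 n1 ninf - n0) / INR (nsum n0 n1 ninf) in
  let B := INR (nsum n0 n1 ninf - n1) / INR (nsum n0 n1 ninf) in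
  let Lx := - A * (2 * x) / (x^2+y^2) + B * (2 * (1 - x)) / ((1-x)^2+y^2) in
  let Ly := - A * (2 * y) / (x^2+y^2) - B * (2 * y) / ((1-x)^2+y^2) in
  0 < x^2 + y^2 /\ 0 < (1-x)^2 + y^2 /\
  Re (X_eta n0 n1 ninf (((x, y) : C), ((u, v) : C))) + / (2 * l) * (l * Lx * (u^2 - v^2) + 2 * (l * Ly) * u * v) = 0 /\
  Im (X_eta n0 n1 ninf (((x, y) : C), ((u, v) : C))) + / (2 * l) * (- (l * Ly) * (u^2 - v^2) + 2 * (l * Lx) * u * v) = 0.
Proof.
  intros h0 h1 h2 HS Hl A B Lx Ly.
  destruct (key_C _ _ _ _ _ h0 h1 h2 HS) as (Hxi & Hxi1 & Heta & E).
  apply C_neq0 in Hxi. apply C_neq0 in Hxi1. simpl in Hxi, Hxi1.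
  assert (q1 : 0 < x^2 + y^2) by (destruct Hxi; nra).
  assert (q2 : 0 < (1-x)^2 + y^2).
  { destruct Hxi1 as [h|h].
    - assert (0 < (1-x)*(1-x)) by (apply Rsqr_pos_lt; intro Z; apply h; lra). replace ((1-x)^2) with ((1-x)*(1-x)) by ring; replace (y^2) with (y*y) by ring; assert (0 <= y*y) by apply Rle_0_sqr; assert (0 <= (1-x)*(1-x)) by apply Rle_0_sqr; lra.
    - assert (0 < y*y) by (apply Rsqr_pos_lt; intro Z; apply h; lra). replace ((1-x)^2) with ((1-x)*(1-x)) by ring; replace (y^2) with (y*y) by ring; assert (0 <= y*y) by apply Rle_0_sqr; assert (0 <= (1-x)*(1-x)) by apply Rle_0_sqr; lra. }
  split; [auto|split; [auto|]].
  rewrite E. unfold Lx, Ly, A, B. fold A B.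
  unfold Re, Im, Copp, Cmult, Cplus, Cdiv, Cinv, Cminus, RtoC, Copp, Cplus; simpl.
  split; field; lra.
Qed.

Lemma loc_int a b t : a < t < b -> locally t (fun s => a < s < b).
Proof.
  intros Ht. assert (He : 0 < Rmin (t - a) (b - t)) by (apply Rmin_pos; lra).
  exists (mkposreal _ He). intros s Hs.
  unfold ball in Hs; simpl in Hs; unfold AbsRing_ball, abs, minus, plus, opp in Hs; simpl in Hs.
  apply Rabs_lt_between in Hs.
  pose proof (Rmin_l (t - a) (b - t)). pose proof (Rmin_r (t - a) (b - t)). lra.
Qed.

Lemma cont_C (f : R -> C) t : continuous (fun s => fst (f s)) t ->
  continuous (fun s => snd (f s)) t -> continuous f t.
Proof.
  intros H1 H2. apply filterlim_locally. intros eps.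
  apply (proj1 (filterlim_locally _ _)) with (eps := eps) in H1.
  apply (proj1 (filterlim_locally _ _)) with (eps := eps) in H2.
  generalize (filter_and _ _ H1 H2). apply filter_imp. intros s [A B].
  split; assumption.
Qed.

Lemma conf_nz n0 n1 ninf x y : conf_factor n0 n1 ninf x y <> 0.
Proof. rewrite conf_eq. apply Rgt_not_eq, exp_pos. Qed.

Theorem corollary5 (n0 n1 ninf : nat) :
  (1 <= n0)%nat -> (n0 <= n1)%nat -> (n1 <= ninf)%nat ->
  forall (gam : R -> C * C) (a b : R),
    is_integral_curve_X n0 n1 ninf gam a b ->
    is_geodesic_S n0 n1 ninf gam a b.
Proof.
  intros h0 h1 h2 gam a b Hint.
  split; [intros t Ht; apply (Hint t Ht)|split].
  - intros t Ht. destruct (Hint t Ht) as (_ & Hx & Hy & Hu & Hv).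
    split; apply cont_C; apply (@ex_derive_continuous R_AbsRing R_NormedModule).
    + exists (Re (X_xi (gam t))); exact Hx.
    + exists (Im (X_xi (gam t))); exact Hy.
    + exists (Re (X_eta n0 n1 ninf (gam t))); exact Hu.
    + exists (Im (X_eta n0 n1 ninf (gam t))); exact Hv.
  - assert (DX : forall s, a < s < b -> Derive (fun s => Re (fst (gam s))) s = Re (snd (gam s)))
      by (intros s Hs; apply is_derive_unique; apply (Hint s Hs)).
    assert (DY : forall s, a < s < b -> Derive (fun s => Im (fst (gam s))) s = Im (snd (gam s)))
      by (intros s Hs; apply is_derive_unique; apply (Hint s Hs)).
    intros t Ht.
    assert (DDX : Derive (Derive (fun s => Re (fst (gam s)))) t = Re (X_eta n0 n1 ninf (gam t))).
    { rewrite (Derive_ext_loc _ (fun s => Re (snd (gam s)))).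
      - apply is_derive_unique, Hint; auto.
      - apply filter_imp with (2 := loc_int a b t Ht). intros; apply DX; auto. }
    assert (DDY : Derive (Derive (fun s => Im (fst (gam s)))) t = Im (X_eta n0 n1 ninf (gam t))).
    { rewrite (Derive_ext_loc _ (fun s => Im (snd (gam s)))).
      - apply is_derive_unique, Hint; auto.
      - apply filter_imp with (2 := loc_int a b t Ht). intros; apply DY; auto. }
    split.
    + intros k. destruct k; cbv beta iota; split.
      * exists (Re (X_xi (gam t))); apply Hint; auto.
      * apply ex_derive_ext_loc with (f := fun s => Re (snd (gam s))).
        -- apply filter_imp with (2 := loc_int a b t Ht). intros; symmetry; apply DX; auto.
        -- exists (Re (X_eta n0 n1 ninf (gam t))); apply Hint; auto.
      * exists (Im (X_xi (gam t))); apply Hint; auto.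
      * apply ex_derive_ext_loc with (f := fun s => Im (snd (gam s))).
        -- apply filter_imp with (2 := loc_int a b t Ht). intros; symmetry; apply DY; auto.
        -- exists (Im (X_eta n0 n1 ninf (gam t))); apply Hint; auto.
    + intros k Hk. destruct (Hint t Ht) as (HS & _).
      destruct k as [|[|k]]; [ | | lia].
      * rewrite (chris_sum0 (conf_factor n0 n1 ninf) _ _
          (fun i => Derive ((fun k s => match k with O => Re (fst (gam s)) | _ => Im (fst (gam s)) end) i) t))
          by apply conf_nz.
        cbv beta iota. rewrite DDX, DX, DY by auto.
        destruct (gam t) as [[x y] [u v]].
        pose proof (key_R n0 n1 ninf x y u v (conf_factor n0 n1 ninf x y) h0 h1 h2 HS (conf_nz _ _ _ _ _)) as K.
        cbv zeta in K. destruct K as (q1 & q2 & K1 & K2).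
        unfold Re, Im in *. cbn [fst snd] in *.
        rewrite dcf_x, dcf_y by auto. exact K1.
      * rewrite (chris_sum1 (conf_factor n0 n1 ninf) _ _
          (fun i => Derive ((fun k s => match k with O => Re (fst (gam s)) | _ => Im (fst (gam s)) end) i) t))
          by apply conf_nz.
        cbv beta iota. rewrite DDY, DX, DY by auto.
        destruct (gam t) as [[x y] [u v]].
        pose proof (key_R n0 n1 ninf x y u v (conf_factor n0 n1 ninf x y) h0 h1 h2 HS (conf_nz _ _ _ _ _)) as K.
        cbv zeta in K. destruct K as (q1 & q2 & K1 & K2).
        unfold Re, Im in *. cbn [fst snd] in *.
        rewrite dcf_x, dcf_y by auto. exact K2.
Qed.
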